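(* Let $\mathcal K$ be a finitely complete 2-category with a good yoneda structure. Let $C$ be small, $i:M\to\mathcal PC$ and $f:C\to A$ with $M$ and $f$ admissible. Then the colimit of $f$ weighted by $i$ exists iff there is an admissible 1-cell $\mathrm{col}(i,f):M\to A$ together with an isomorphism $A(\mathrm{col}(i,f),1)\cong\mathcal PC(i,A(f,1))$.
   Context: Given $f:A\to C$, $g:A\to B$, $h:B\to C$, a 2-cell $\phi:f\Rightarrow hg$ exhibits $g$ as a left lifting of $f$ along (through) $h$ if for every $k:A\to B$, $\kappa\mapsto(h\kappa)\cdot\phi$ is a bijection from 2-cells $g\Rightarrow k$ to 2-cells $f\Rightarrow hk$; it is absolute if $\phi j$ exhibits $gj$ as a left lifting of $fj$ along $h$ for all $j:D\to A$; $\phi$ exhibits $h$ as a left extension of $f$ along $g$ if for every $k:B\to C$, $\kappa\mapsto(\kappa g)\cdot\phi$ is a bijection from 2-cells $h\Rightarrow k$ to 2-cells $f\Rightarrow kg$; it is pointwise if for every $c:X\to B$, with lax pullback $p:g/c\to A$, $q:g/c\to X$, $\lambda:gp\Rightarrow cq$, $(h\lambda)\cdot(\phi p)$ exhibits $hc$ as a left extension of $fp$ along $q$. A good yoneda structure on a finitely complete 2-category: a class of admissible 1-cells with $fg$ admissible whenever $f$ is; an object $A$ is admissible when $1_A$ is; for admissible $A$ an object $\mathcal PA$ and admissible $y_A:A\to\mathcal PA$; for $f:A\to B$ with $A$, $f$ admissible a 1-cell $B(f,1):B\to\mathcal PA$ and 2-cell $\chi^f:y_A\Rightarrow B(f,1)f$;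 such that (i) $\chi^f$ exhibits $f$ as an absolute left lifting of $y_A$ through $B(f,1)$; (ii) if $A$, $f:A\to B$ admissible and $\psi:y_A\Rightarrow kf$ exhibits $f$ as an absolute left lifting of $y_A$ along $k$, then $\psi$ exhibits $k$ as a pointwise left extension of $y_A$ along $f$. $C$ is small if $C$ and $\mathcal PC$ are admissible. Notation: $B(f,x)$ means $B(f,1)x$; thus for admissible $i:M\to\mathcal PC$ (admissible here since $\mathcal PC$ is admissible), $\mathcal PC(i,A(f,1))=\mathcal PC(i,1)A(f,1):A\to\mathcal PM$. For $C$ small, $i:M\to\mathcal PC$, $f:C\to A$ with $M$, $f$ admissible, a colimit of $f$ weighted by $i$ is an admissible $\mathrm{col}(i,f):M\to A$ with a 2-cell $\eta:i\Rightarrow A(f,1)\mathrm{col}(i,f)$ exhibiting $\mathrm{col}(i,f)$ as an absolute left lifting of $i$ through $A(f,1)$. *)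

(* Defs.v *)
From Corelib Require Import ssreflect ssrfun ssrbool.

Record pre2cat := Pre2Cat {
  ob : Type;
  hom : ob -> ob -> Type;
  cell : forall A B : ob, hom A B -> hom A B -> Type;
  id1 : forall A : ob, hom A A;
  comp1 : forall A B C : ob, hom B C -> hom A B -> hom A C;
  id2 : forall (A B : ob) (f : hom A B), cell A B f f;
  vcomp : forall (A B : ob) (f g h : hom A B),
      cell A B g h -> cell A B f g -> cell A B f h;
  hcomp : forall (A B C : ob) (g g' : hom B C) (f f' : hom A B),
      cell B C g g' -> cell A B f f' ->
      cell A C (comp1 A B C g f) (comp1 A B C g' f')
}.

Arguments hom {p} _ _.
Arguments cell {p A B} _ _.
Arguments id1 {p} _.
Arguments comp1 {p A B C} _ _.
Arguments id2 {p A B} _.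
Arguments vcomp {p A B f g h} _ _.
Arguments hcomp {p A B C g g' f f'} _ _.

Definition cast2 {K : pre2cat} {A B : ob K} {f f' g g' : hom A B}
  (ef : f = f') (eg : g = g') (a : cell f g) : cell f' g' :=
  match ef in _ = x, eg in _ = y return cell x y with
  | eq_refl, eq_refl => a end.

Record is2cat (K : pre2cat) : Prop := {
  comp1A : forall (A B C D : ob K) (h : hom C D) (g : hom B C) (f : hom A B),
      comp1 h (comp1 g f) = comp1 (comp1 h g) f;
  comp1_idl : forall (A B : ob K) (f : hom A B), comp1 (id1 B) f = f;
  comp1_idr : forall (A B : ob K) (f : hom A B), comp1 f (id1 A) = f;
  vcompA : forall (A B : ob K) (f g h k : hom A B)
      (c : cell h k) (b : cell g h) (a : cell f g),
      vcomp c (vcomp b a) = vcomp (vcomp c b) a;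
  vcomp_idl : forall (A B : ob K) (f g : hom A B) (a : cell f g),
      vcomp (id2 g) a = a;
  vcomp_idr : forall (A B : ob K) (f g : hom A B) (a : cell f g),
      vcomp a (id2 f) = a;
  hcomp_id : forall (A B C : ob K) (g : hom B C) (f : hom A B),
      hcomp (id2 g) (id2 f) = id2 (comp1 g f);
  interchange : forall (A B C : ob K) (g g' g'' : hom B C) (f f' f'' : hom A B)
      (b' : cell g' g'') (b : cell g g') (a' : cell f' f'') (a : cell f f'),
      hcomp (vcomp b' b) (vcomp a' a) = vcomp (hcomp b' a') (hcomp b a);
  hcompA : forall (A B C D : ob K) (h h' : hom C D) (g g' : hom B C)
      (f f' : hom A B) (c : cell h h') (b : cell g g') (a : cell f f'),
      hcomp c (hcomp b a) =
      cast2 (esym (comp1A A B C D h g f)) (esym (comp1A A B C D h' g' f'))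
            (hcomp (hcomp c b) a);
  hcomp_idl : forall (A B : ob K) (f f' : hom A B) (a : cell f f'),
      hcomp (id2 (id1 B)) a =
      cast2 (esym (comp1_idl A B f)) (esym (comp1_idl A B f')) a;
  hcomp_idr : forall (A B : ob K) (f f' : hom A B) (a : cell f f'),
      hcomp a (id2 (id1 A)) =
      cast2 (esym (comp1_idr A B f)) (esym (comp1_idr A B f')) a
}.

Record twocat := TwoCat { tc :> pre2cat; tc_laws : is2cat tc }.

Section TwoCatDefs.
Context {K : twocat}.

Definition assoc {A B C D : ob K} (h : hom C D) (g : hom B C) (f : hom A B) :
  comp1 h (comp1 g f) = comp1 (comp1 h g) f :=
  comp1A _ (tc_laws K) A B C D h g f.

Definition wl {A B C : ob K} (h : hom B C) {f g : hom A B} (a : cell f g) :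
  cell (comp1 h f) (comp1 h g) := hcomp (id2 h) a.
Definition wr {A B C : ob K} {g h : hom B C} (a : cell g h) (f : hom A B) :
  cell (comp1 g f) (comp1 h f) := hcomp a (id2 f).

Definition iso1 {A B : ob K} (f g : hom A B) : Prop :=
  exists (a : cell f g) (b : cell g f), vcomp b a = id2 f /\ vcomp a b = id2 g.

Definition left_lifting {A B C : ob K} (f : hom A C) (g : hom A B) (h : hom B C)
  (phi : cell f (comp1 h g)) : Prop :=
  forall k : hom A B,
    bijective (fun kappa : cell g k => vcomp (wl h kappa) phi).

Definition abs_left_lifting {A B C : ob K} (f : hom A C) (g : hom A B)
  (h : hom B C) (phi : cell f (comp1 h g)) : Prop :=
  forall (D : ob K) (j : hom D A),
    left_lifting (comp1 f j) (comp1 g j) h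
      (cast2 erefl (esym (assoc h g j)) (wr phi j)).

Definition left_extension {A B C : ob K} (f : hom A C) (g : hom A B)
  (h : hom B C) (phi : cell f (comp1 h g)) : Prop :=
  forall k : hom B C,
    bijective (fun kappa : cell h k => vcomp (wr kappa g) phi).

Definition is_comma {A B X : ob K} (g : hom A B) (c : hom X B) (P : ob K)
  (p : hom P A) (q : hom P X) (lam : cell (comp1 g p) (comp1 c q)) : Prop :=
  (forall (Y : ob K) (p' : hom Y A) (q' : hom Y X)
          (lam' : cell (comp1 g p') (comp1 c q')),
     exists! u : hom Y P,
       exists (ep : comp1 p u = p') (eq : comp1 q u = q'),
         cast2 (eq_trans (esym (assoc g p u)) (f_equal (comp1 g) ep))
               (eq_trans (esym (assoc c q u)) (f_equal (comp1 c) eq))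
               (wr lam u) = lam')
  /\
  (forall (Y : ob K) (u v : hom Y P)
          (al : cell (comp1 p u) (comp1 p v)) (be : cell (comp1 q u) (comp1 q v)),
     vcomp (wl c be)
           (cast2 (esym (assoc g p u)) (esym (assoc c q u)) (wr lam u))
     = vcomp (cast2 (esym (assoc g p v)) (esym (assoc c q v)) (wr lam v))
             (wl g al) ->
     exists! ga : cell u v, wl p ga = al /\ wl q ga = be).

Definition is_pullback {A B C : ob K} (g : hom A B) (h : hom C B) (P : ob K)
  (p : hom P A) (q : hom P C) : Prop :=
  exists e : comp1 g p = comp1 h q,
  (forall (Y : ob K) (p' : hom Y A) (q' : hom Y C),
     comp1 g p' = comp1 h q' ->
     exists! u : hom Y P, comp1 p u = p' /\ comp1 q u = q')
  /\
  (forall (Y : ob K) (u v : hom Y P)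
          (al : cell (comp1 p u) (comp1 p v)) (be : cell (comp1 q u) (comp1 q v)),
     wl g al =
     cast2 (eq_trans (assoc h q u)
             (eq_trans (f_equal (fun x => comp1 x u) (esym e)) (esym (assoc g p u))))
           (eq_trans (assoc h q v)
             (eq_trans (f_equal (fun x => comp1 x v) (esym e)) (esym (assoc g p v))))
           (wl h be) ->
     exists! ga : cell u v, wl p ga = al /\ wl q ga = be).

Definition is_terminal (T : ob K) : Prop :=
  (forall X : ob K, exists t : hom X T, forall t' : hom X T, t' = t) /\
  (forall (X : ob K) (t : hom X T) (a : cell t t), a = id2 t).

(* finite completeness: terminal object, pullbacks and comma objects
   (equivalently, finite products, equalizers and cotensors with 2) *)
Definition finitely_complete : Prop :=
  (exists T : ob K, is_terminal T) /\
  (forall (A B C : ob K) (g : hom A B) (h : hom C B),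
     exists (P : ob K) (p : hom P A) (q : hom P C), is_pullback g h P p q) /\
  (forall (A B X : ob K) (g : hom A B) (c : hom X B),
     exists (P : ob K) (p : hom P A) (q : hom P X)
            (lam : cell (comp1 g p) (comp1 c q)), is_comma g c P p q lam).

Definition pw_left_extension {A B C : ob K} (f : hom A C) (g : hom A B)
  (h : hom B C) (phi : cell f (comp1 h g)) : Prop :=
  forall (X : ob K) (c : hom X B) (P : ob K) (p : hom P A) (q : hom P X)
         (lam : cell (comp1 g p) (comp1 c q)),
    is_comma g c P p q lam ->
    left_extension (comp1 f p) q (comp1 h c)
      (cast2 erefl (assoc h c q)
         (vcomp (wl h lam) (cast2 erefl (esym (assoc h g p)) (wr phi p)))).

End TwoCatDefs.

Record good_yoneda (K : twocat) := GoodYoneda {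
  adm : forall A B : ob K, hom A B -> Prop;
  adm_comp : forall (A B C : ob K) (f : hom B C) (g : hom A B),
      adm B C f -> adm A C (comp1 f g);
  (* PSh A and yon A are only meaningful for admissible A *)
  PSh : ob K -> ob K;
  yon : forall A : ob K, hom A (PSh A);
  yon_adm : forall A : ob K, adm A A (id1 A) -> adm A (PSh A) (yon A);
  (* rep hA hf = B(f,1) : B -> P A, defined for A and f admissible *)
  rep : forall (A B : ob K) (f : hom A B),
      adm A A (id1 A) -> adm A B f -> hom B (PSh A);
  chi : forall (A B : ob K) (f : hom A B) (hA : adm A A (id1 A)) (hf : adm A B f),
      cell (yon A) (comp1 (rep A B f hA hf) f);
  yoneda_i : forall (A B : ob K) (f : hom A B) (hA : adm A A (id1 A)) (hf : adm A B f),
      abs_left_lifting (yon A) f (rep A B f hA hf) (chi A B f hA hf);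
  yoneda_ii : forall (A B : ob K) (f : hom A B) (k : hom B (PSh A))
      (psi : cell (yon A) (comp1 k f)),
      adm A A (id1 A) -> adm A B f ->
      abs_left_lifting (yon A) f k psi ->
      pw_left_extension (yon A) f k psi
}.

Arguments adm {K} _ {A B} _.
Arguments PSh {K} _ _.
Arguments yon {K} _ _.
Arguments rep {K} _ {A B f} _ _.
Arguments chi {K} _ {A B f} _ _.

Lemma adm_into {K : twocat} (Y : good_yoneda K) {A B : ob K}
  (hB : adm Y (id1 B)) (f : hom A B) : adm Y f.
Proof.
  rewrite -(comp1_idl _ (tc_laws K) A B f). by apply: adm_comp.
Qed.

Definition is_weighted_colimit {K : twocat} (Y : good_yoneda K) {C M A : ob K}
  (hC : adm Y (id1 C)) (i : hom M (PSh Y C)) (f : hom C A) (hf : adm Y f)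
  (col : hom M A) (eta : cell i (comp1 (rep Y hC hf) col)) : Prop :=
  adm Y col /\ abs_left_lifting i col (rep Y hC hf) eta.

(* Main.v *)
Require Import Defs.
From Corelib Require Import ssreflect ssrfun ssrbool.
From Stdlib Require Import JMeq.
Notation "x ~= y" := (JMeq x y) (at level 70, no associativity).

Section Infra.
Context {K : twocat}.

Lemma assocE {A B C D : ob K} (h : hom C D) (g : hom B C) (f : hom A B) :
  comp1 h (comp1 g f) = comp1 (comp1 h g) f.
Proof. exact (assoc h g f). Qed.
Lemma idlE {A B : ob K} (f : hom A B) : comp1 (id1 B) f = f.
Proof. exact (comp1_idl _ (tc_laws K) _ _ f). Qed.
Lemma idrE {A B : ob K} (f : hom A B) : comp1 f (id1 A) = f.
Proof. exact (comp1_idr _ (tc_laws K) _ _ f). Qed.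

Lemma cast2_jm {A B : ob K} {f f' g g' : hom A B} (e1 : f = f') (e2 : g = g')
  (a : cell f g) : cast2 e1 e2 a ~= a.
Proof. by destruct e1, e2. Qed.

Lemma cast2_bij {A B : ob K} {f f' g g' : hom A B} (e1 : f = f') (e2 : g = g') :
  bijective (@cast2 K A B f f' g g' e1 e2).
Proof. destruct e1, e2. by exists id. Qed.

Lemma cast2_vcomp {A B : ob K} {f f' g g' h h' : hom A B} (e1 : f = f') (e2 : g = g')
  (e3 : h = h') (b : cell g h) (a : cell f g) :
  cast2 e1 e3 (vcomp b a) = vcomp (cast2 e2 e3 b) (cast2 e1 e2 a).
Proof. by destruct e1, e2, e3. Qed.

Lemma vcomp_jm {A B : ob K} {f g h f' g' h' : hom A B}
  (b : cell g h) (a : cell f g) (b' : cell g' h') (a' : cell f' g') :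
  f = f' -> g = g' -> h = h' -> b ~= b' -> a ~= a' -> vcomp b a ~= vcomp b' a'.
Proof. move=> e1 e2 e3; subst. move=> H1 H2. apply JMeq_eq in H1. apply JMeq_eq in H2. by subst. Qed.

Lemma wl_jm {A B C : ob K} {h h' : hom B C} {f g f' g' : hom A B}
  (a : cell f g) (a' : cell f' g') :
  h = h' -> f = f' -> g = g' -> a ~= a' -> wl h a ~= wl h' a'.
Proof. move=> e1 e2 e3; subst. move=> H1. apply JMeq_eq in H1. by subst. Qed.

Lemma wr_jm {A B C : ob K} {g h g' h' : hom B C} {f f' : hom A B}
  (a : cell g h) (a' : cell g' h') :
  f = f' -> g = g' -> h = h' -> a ~= a' -> wr a f ~= wr a' f'.
Proof. move=> e1 e2 e3; subst. move=> H1. apply JMeq_eq in H1. by subst. Qed.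

Lemma wl_wl {A B C D : ob K} (h : hom C D) (g : hom B C) {f f' : hom A B}
  (a : cell f f') : wl h (wl g a) ~= wl (comp1 h g) a.
Proof.
  rewrite /wl (hcompA _ (tc_laws K)) (hcomp_id _ (tc_laws K)). exact: cast2_jm.
Qed.

Lemma wr_wr {A B C D : ob K} {h h' : hom C D} (a : cell h h') (g : hom B C)
  (f : hom A B) : wr (wr a g) f ~= wr a (comp1 g f).
Proof.
  rewrite /wr. have := hcompA _ (tc_laws K) _ _ _ _ _ _ _ _ _ _ a (id2 g) (id2 f).
  rewrite (hcomp_id _ (tc_laws K)) => ->. apply: JMeq_sym; exact: cast2_jm.
Qed.

Lemma wr_wl {A B C D : ob K} (h : hom C D) {g g' : hom B C} (a : cell g g')
  (f : hom A B) : wr (wl h a) f ~= wl h (wr a f).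
Proof.
  rewrite /wr /wl (hcompA _ (tc_laws K)). apply: JMeq_sym; exact: cast2_jm.
Qed.

Lemma wl_id1 {A B : ob K} {f f' : hom A B} (a : cell f f') : wl (id1 B) a ~= a.
Proof. rewrite /wl (hcomp_idl _ (tc_laws K)). exact: cast2_jm. Qed.

Lemma wr_id1 {A B : ob K} {f f' : hom A B} (a : cell f f') : wr a (id1 A) ~= a.
Proof. rewrite /wr (hcomp_idr _ (tc_laws K)). exact: cast2_jm. Qed.

Lemma wl_vcomp {A B C : ob K} (h : hom B C) {f g k : hom A B}
  (b : cell g k) (a : cell f g) : wl h (vcomp b a) = vcomp (wl h b) (wl h a).
Proof.
  rewrite /wl -(Defs.interchange _ (tc_laws K)). by rewrite (vcomp_idl _ (tc_laws K)).
Qed.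

Lemma wr_vcomp {A B C : ob K} {f g k : hom B C} (b : cell g k) (a : cell f g)
  (h : hom A B) : wr (vcomp b a) h = vcomp (wr b h) (wr a h).
Proof.
  rewrite /wr -(Defs.interchange _ (tc_laws K)). by rewrite (vcomp_idl _ (tc_laws K)).
Qed.

Lemma wl_id2 {A B C : ob K} (h : hom B C) (g : hom A B) :
  wl h (id2 g) = id2 (comp1 h g).
Proof. exact (hcomp_id _ (tc_laws K) _ _ _ h g). Qed.

Lemma wr_id2 {A B C : ob K} (h : hom B C) (g : hom A B) :
  wr (id2 h) g = id2 (comp1 h g).
Proof. exact (hcomp_id _ (tc_laws K) _ _ _ h g). Qed.

Lemma natW {A B C : ob K} {h k : hom B C} {g g' : hom A B}
  (ka : cell h k) (al : cell g g') :
  vcomp (wr ka g') (wl h al) = vcomp (wl k al) (wr ka g).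
Proof.
  rewrite /wr /wl -!(Defs.interchange _ (tc_laws K)).
  by rewrite !(vcomp_idl _ (tc_laws K)) !(vcomp_idr _ (tc_laws K)).
Qed.

Lemma vcompA' {A B : ob K} {f g h k : hom A B} (c : cell h k) (b : cell g h) (a : cell f g) :
  vcomp c (vcomp b a) = vcomp (vcomp c b) a.
Proof. exact (vcompA _ (tc_laws K) _ _ _ _ _ _ c b a). Qed.
Lemma vcomp_idl' {A B : ob K} {f g : hom A B} (a : cell f g) : vcomp (id2 g) a = a.
Proof. exact (vcomp_idl _ (tc_laws K) _ _ _ _ a). Qed.

End Infra.

Lemma bij_conj {X Y X' Y' : Type} (F : X -> Y) (G : X' -> Y') (u : X' -> X) (v : Y -> Y') :
  bijective F -> bijective u -> bijective v -> (forall x, G x = v (F (u x))) -> bijective G.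
Proof.
  move=> bF bu bv e. apply: (eq_bij (f := v \o (F \o u))); last by move=> x; rewrite e.
  by apply: bij_comp => //; apply: bij_comp.
Qed.

Lemma bij_cancel {X Y Z W : Type} (T : X -> W) (Cm : Y -> Z) (E : X -> Y) (v : Z -> W) :
  bijective T -> bijective Cm -> bijective v -> (forall x, T x = v (Cm (E x))) -> bijective E.
Proof.
  move=> bT [Ci CK CiK] [vi vK viK] e.
  apply: (eq_bij (f := Ci \o (vi \o T))); last by move=> x /=; rewrite e vK CK.
  apply: bij_comp; first by exists Cm.
  apply: bij_comp => //; by exists v.
Qed.

Lemma bij_left_inv {X Y Z : Type} (E : X -> Y) (Phi : Y -> Z) (Psi : Z -> Y) :
  bijective (fun x => Phi (E x)) -> cancel Phi Psi -> bijective E.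
Proof.
  move=> [G GK KG] PK. exists (fun y => G (Phi y)).
  - move=> x. exact: GK.
  - move=> y. by rewrite -(PK (E _)) KG PK.
Qed.

Section Lift.
Context {K : twocat}.

Definition absmap {A B C D : ob K} {f : hom A C} {g : hom A B} {h : hom B C}
  (phi : cell f (comp1 h g)) (j : hom D A) (k : hom D B) :
  cell (comp1 g j) k -> cell (comp1 f j) (comp1 h k) :=
  fun kappa => vcomp (wl h kappa) (cast2 erefl (esym (assoc h g j)) (wr phi j)).

Lemma absE {A B C : ob K} {f : hom A C} {g : hom A B} {h : hom B C}
  (phi : cell f (comp1 h g)) :
  abs_left_lifting f g h phi <-> forall D (j : hom D A) k, bijective (absmap phi j k).
Proof. by []. Qed.

Lemma abs_to_left {A B C : ob K} {f : hom A C} {g : hom A B} {h : hom B C}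
  (phi : cell f (comp1 h g)) : abs_left_lifting f g h phi -> left_lifting f g h phi.
Proof.
  move=> H k. have bF := H A (id1 A) k.
  apply: (bij_conj _ _ _ _ bF (cast2_bij (esym (idrE g)) erefl) (cast2_bij (idrE f) erefl)).
  move=> kappa. apply: JMeq_eq. apply: JMeq_sym.
  apply: JMeq_trans; first apply cast2_jm.
  apply: vcomp_jm.
  - exact: idrE.
  - by rewrite idrE.
  - by [].
  - apply: wl_jm => //; first exact: idrE. apply cast2_jm.
  - apply: JMeq_trans; first apply cast2_jm. exact: wr_id1.
Qed.


Lemma cast2_eq_jm {A B : ob K} {f f' g g' : hom A B} (e1 : f = f') (e2 : g = g')
  (a : cell f g) b : cast2 e1 e2 a = b -> a ~= b.
Proof. move=> <-. apply JMeq_sym. apply cast2_jm. Qed.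

Section Comp.
Context {M X Z W : ob K} (y : hom M X) (i : hom M Z) (P : hom Z X) (Q : hom W Z)
  (c : hom M W) (chi : cell y (comp1 P i)) (eta : cell i (comp1 Q c)).

Definition theta := cast2 erefl (assoc P Q c) (vcomp (wl P eta) chi).

Lemma comp_ident {D : ob K} (j : hom D M) (m : hom D W) (kappa : cell (comp1 c j) m) :
  absmap theta j m kappa =
  cast2 erefl (assoc P Q m) (absmap chi j (comp1 Q m) (absmap eta j m kappa)).
Proof.
  apply: JMeq_eq. apply JMeq_sym. apply: JMeq_trans; first apply cast2_jm.
  rewrite /absmap wl_vcomp -vcompA'.
  apply: vcomp_jm.
  - by [].
  - by rewrite !assoc.
  - by rewrite !assoc.
  - apply wl_wl.
  - apply JMeq_sym. apply: JMeq_trans; first apply cast2_jm.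
    apply: (JMeq_trans (y := wr (vcomp (wl P eta) chi) j)).
      apply: wr_jm; try by rewrite ?assoc. apply cast2_jm.
    rewrite wr_vcomp. apply: vcomp_jm.
    + by [].
    + by rewrite !assoc.
    + by rewrite !assoc.
    + apply: JMeq_trans; first apply wr_wl.
      apply: wl_jm => //; first by rewrite !assoc.
      apply JMeq_sym; apply cast2_jm.
    + apply JMeq_sym; apply cast2_jm.
Qed.

Lemma lift_comp : abs_left_lifting y i P chi -> abs_left_lifting i c Q eta ->
  abs_left_lifting y c (comp1 P Q) theta.
Proof.
  move=> H1 H2 D j m.
  apply: (eq_bij (f := cast2 erefl (assoc P Q m) \o
                       (absmap chi j (comp1 Q m) \o absmap eta j m))).
  - apply: bij_comp; first apply cast2_bij. apply: bij_comp; [apply H1 | apply H2].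
  - move=> kappa. symmetry. apply comp_ident.
Qed.

Lemma lift_cancel : abs_left_lifting y i P chi ->
  abs_left_lifting y c (comp1 P Q) theta -> abs_left_lifting i c Q eta.
Proof.
  move=> H1 H3 D j m.
  apply: (bij_cancel _ _ _ _ (H3 D j m) (H1 D j (comp1 Q m)) (cast2_bij erefl (assoc P Q m))).
  move=> kappa. apply comp_ident.
Qed.
End Comp.

Lemma iso_lift {A B C : ob K} {f : hom A C} {g : hom A B} {k k' : hom B C}
  (psi : cell f (comp1 k g)) (s : cell k k') (s' : cell k' k) :
  vcomp s' s = id2 k -> vcomp s s' = id2 k' ->
  abs_left_lifting f g k psi -> abs_left_lifting f g k' (vcomp (wr s g) psi).
Proof.
  move=> e1 e2 H D j m.
  apply: (bij_conj _ _ id (vcomp (wr s m)) (H D j m)).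
  - by exists id.
  - exists (vcomp (wr s' m)) => x; by rewrite vcompA' -wr_vcomp ?e1 ?e2 wr_id2 vcomp_idl'.
  - move=> kappa. rewrite /id /absmap vcompA' natW -vcompA'. congr (vcomp _ _).
    apply: JMeq_eq. apply: JMeq_trans; first apply cast2_jm.
    rewrite wr_vcomp. apply: vcomp_jm.
    + by [].
    + by rewrite !assoc.
    + by rewrite !assoc.
    + apply wr_wr.
    + apply JMeq_sym; apply cast2_jm.
Qed.

Lemma ext_iso {A B C : ob K} {f : hom A C} {g : hom A B} {h h' : hom B C}
  (phi : cell f (comp1 h g)) (phi' : cell f (comp1 h' g)) :
  left_extension f g h phi -> left_extension f g h' phi' -> iso1 h h'.
Proof.
  move=> H1 H2. case: (H1 h') => F1 F1K KF1. case: (H2 h) => F2 F2K KF2.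
  have es : vcomp (wr (F1 phi') g) phi = phi' := KF1 phi'.
  have et : vcomp (wr (F2 phi) g) phi' = phi := KF2 phi.
  exists (F1 phi'), (F2 phi). split.
  - apply: (bij_inj (H1 h)). by rewrite wr_vcomp -vcompA' es et wr_id2 vcomp_idl'.
  - apply: (bij_inj (H2 h')). by rewrite wr_vcomp -vcompA' et es wr_id2 vcomp_idl'.
Qed.

End Lift.

Section PW.
Context {K : twocat}.

Lemma pw_ext {A B C : ob K} (f : hom A C) (g : hom A B) (h : hom B C)
  (phi : cell f (comp1 h g)) :
  (exists (P : ob K) (p : hom P A) (q : hom P B)
     (lam : cell (comp1 g p) (comp1 (id1 B) q)), is_comma g (id1 B) P p q lam) ->
  pw_left_extension f g h phi -> left_extension f g h phi.
Proof.
  move=> [P [p [q [lam Hcm]]]] Hpw k.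
  have Hk := Hpw B (id1 B) P p q lam Hcm k.
  case: Hcm => Hc _.
  have [s [[ep [eq_q Hl]] _]] :=
    Hc A (id1 A) g (cast2 (esym (idrE g)) (esym (idlE g)) (id2 g)).
  have Hls : wr lam s ~= id2 g.
  { apply: JMeq_trans; first apply (cast2_eq_jm _ _ _ _ Hl). apply cast2_jm. }
  pose Phi (beta : cell f (comp1 k g)) : cell (comp1 f p) (comp1 k q) :=
    cast2 erefl (f_equal (comp1 k) (idlE q))
      (vcomp (wl k lam) (cast2 erefl (esym (assoc k g p)) (wr beta p))).
  have e1 : comp1 (comp1 f p) s = f by rewrite -assoc ep idrE.
  have e2 : comp1 (comp1 k q) s = comp1 k g by rewrite -assoc eq_q.
  pose Psi (gam : cell (comp1 f p) (comp1 k q)) : cell f (comp1 k g) :=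
    cast2 e1 e2 (wr gam s).
  apply: (bij_left_inv _ Phi Psi).
  - apply: (bij_conj _ _ _ id Hk (cast2_bij (esym (idrE h)) erefl)).
      by exists id.
    move=> kappa. rewrite /id /Phi.
    apply: JMeq_eq. apply: JMeq_trans; first apply cast2_jm.
    rewrite wr_vcomp (cast2_vcomp erefl (esym (assoc h g p)) (esym (assoc k g p))).
    rewrite vcompA'.
    have E3 : cast2 (esym (assoc h g p)) (esym (assoc k g p)) (wr (wr kappa g) p)
              = wr kappa (comp1 g p).
    { apply: JMeq_eq. apply: JMeq_trans; first apply cast2_jm. apply wr_wr. }
    rewrite E3 -natW -vcompA'.
    apply: vcomp_jm.
    + by [].
    + by rewrite !assoc.
    + by rewrite idlE.
    + apply: wr_jm; try by rewrite ?assoc ?idlE ?idrE. apply JMeq_sym; apply cast2_jm.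
    + apply JMeq_sym; apply cast2_jm.
  - move=> beta. rewrite /Psi /Phi.
    apply: JMeq_eq. apply: JMeq_trans; first apply cast2_jm.
    apply: (JMeq_trans (y := wr (vcomp (wl k lam)
               (cast2 erefl (esym (assoc k g p)) (wr beta p))) s)).
      apply: wr_jm; try by rewrite ?idlE. apply cast2_jm.
    rewrite wr_vcomp.
    apply: (JMeq_trans (y := vcomp (id2 (comp1 k g)) beta)); last by rewrite vcomp_idl'.
    apply: vcomp_jm.
    + by rewrite -!assoc ep idrE.
    + by rewrite -!assoc ep idrE.
    + by rewrite -!assoc eq_q idlE.
    + apply: JMeq_trans; first apply wr_wl.
      apply: (JMeq_trans (y := wl k (id2 g))); last by rewrite wl_id2.
      apply: wl_jm => //.
      * by rewrite -!assoc ep idrE.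
      * by rewrite -!assoc eq_q idlE.
    + apply: (JMeq_trans (y := wr (wr beta p) s)).
        apply: wr_jm; try by rewrite ?assoc. apply cast2_jm.
      apply: JMeq_trans; first apply wr_wr.
      apply: (JMeq_trans (y := wr beta (id1 A))); last apply wr_id1.
      apply: wr_jm => //.
Qed.

End PW.

Theorem corollary3p11 (K : twocat) (Y : good_yoneda K)
  (HK : @finitely_complete K)
  (C M A : ob K)
  (hC : adm Y (id1 C)) (hPC : adm Y (id1 (PSh Y C)))   (* C small *)
  (i : hom M (PSh Y C)) (f : hom C A)
  (hM : adm Y (id1 M)) (hf : adm Y f) :
  (exists (col : hom M A) (eta : cell i (comp1 (rep Y hC hf) col)),
      is_weighted_colimit Y hC i f hf col eta)
  <->
  (exists (col : hom M A) (hcol : adm Y col),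
      iso1 (rep Y hM hcol) (comp1 (rep Y hM (adm_into Y hPC i)) (rep Y hC hf))).
Proof.
  have Hchi := yoneda_i K Y M (PSh Y C) i hM (adm_into Y hPC i).
  case: HK => _ [_ Hcm].
  split.
  - move=> [col [eta [hcol Heta]]]. exists col, hcol.
    have Hth := lift_comp _ _ _ _ _ _ eta Hchi Heta.
    have Hcc := yoneda_i K Y M A col hM hcol.
    apply: (ext_iso _ _ (pw_ext _ _ _ _ (Hcm _ _ _ col (id1 A))
                          (yoneda_ii K Y _ _ _ _ _ hM hcol Hcc))
                        (pw_ext _ _ _ _ (Hcm _ _ _ col (id1 A))
                          (yoneda_ii K Y _ _ _ _ _ hM hcol Hth))).
  - move=> [col [hcol [s [s' [e1 e2]]]]].
    have H0 := iso_lift _ s s' e1 e2 (yoneda_i K Y M A col hM hcol).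
    case: (abs_to_left _ Hchi (comp1 (rep Y hC hf) col)) => G GK KG.
    set th0 := vcomp (wr s col) (chi Y hM hcol) in H0.
    exists col, (G (cast2 erefl (esym (assoc _ _ col)) th0)).
    split => //.
    apply: (lift_cancel _ _ _ _ _ _ _ Hchi).
    have -> : theta (yon Y M) i (rep Y hM (adm_into Y hPC i)) (rep Y hC hf) col
               (chi Y hM (adm_into Y hPC i)) (G (cast2 erefl (esym (assoc _ _ col)) th0))
              = th0.
    { rewrite /theta KG. apply: JMeq_eq. apply: JMeq_trans; first apply cast2_jm.
      apply cast2_jm. }
    exact H0.
Qed.
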